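(* Let $A$ and $B$ be complex square matrices, not necessarily of the same size, with identical pseudospectra, i.e. $\|(zI-A)^{-1}\|=\|(zI-B)^{-1}\|$ for all $z\in\mathbb{C}$. Then the largest eigenvalue of $\operatorname{Re}A$ equals the largest eigenvalue of $\operatorname{Re}B$, and the smallest eigenvalue of $\operatorname{Re}A$ equals the smallest eigenvalue of $\operatorname{Re}B$.
   Context: $\operatorname{Re}T=(T+T^* )/2$. $\|\cdot\|$ is the spectral norm; by convention $\|(zI-T)^{-1}\|=\infty$ for $z$ an eigenvalue of $T$ (with the identity matrices $I$ of the appropriate sizes). *)

(* Defs.v *)
From HB Require Import structures.
From mathcomp Require Import all_boot all_order all_algebra.
From mathcomp Require Import complex.
From mathcomp Require Import classical_sets reals constructive_ereal.
Set Implicit Arguments. Unset Strict Implicit. Unset Printing Implicit Defensive.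
Import Order.TTheory GRing.Theory Num.Theory.
Local Open Scope ring_scope.
Local Open Scope classical_set_scope.

Definition adjmx (R : realType) m n (A : 'M[R[i]]_(m, n)) : 'M[R[i]]_(n, m) :=
  \matrix_(i, j) conjc (A j i).

(* Hermitian part  Re T = (T + T^* ) / 2 *)
Definition herm_part (R : realType) n (T : 'M[R[i]]_n) : 'M[R[i]]_n :=
  (2%:R)^-1 *: (T + adjmx T).

Definition vnorm (R : realType) n (x : 'cV[R[i]]_n) : R :=
  Num.sqrt (\sum_(k < n) (complex.Re (x k 0) ^+ 2 + complex.Im (x k 0) ^+ 2)).

Definition opnorm (R : realType) m n (A : 'M[R[i]]_(m, n)) : R :=
  sup [set vnorm (A *m x) | x in [set x : 'cV[R[i]]_n | vnorm x = 1]].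

Definition resolvent_norm (R : realType) n (T : 'M[R[i]]_n) (z : R[i]) : \bar R :=
  if (z%:M - T) \in unitmx then ((opnorm (invmx (z%:M - T)))%:E)%E else (+oo)%E.

Definition is_max_eig (R : realType) n (H : 'M[R[i]]_n) (l : R) : Prop :=
  eigenvalue H ((l%:C)%C) /\ forall mu : R[i], eigenvalue H mu -> mu <= (l%:C)%C.
Definition is_min_eig (R : realType) n (H : 'M[R[i]]_n) (l : R) : Prop :=
  eigenvalue H ((l%:C)%C) /\ forall mu : R[i], eigenvalue H mu -> (l%:C)%C <= mu.

(* Main.v *)
Require Import Defs.
From HB Require Import structures.
From mathcomp Require Import all_boot all_order all_algebra.
From mathcomp Require Import complex spectral sesquilinear.
From mathcomp Require Import classical_sets reals constructive_ereal.
From mathcomp Require Import ring lra.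
Import Order.TTheory GRing.Theory Num.Theory.
Local Open Scope ring_scope.
Set Implicit Arguments. Unset Strict Implicit. Unset Printing Implicit Defensive.
Local Open Scope complex_scope.
Section Basic.
Variable R : realType.
Implicit Types (m n p : nat).

Lemma adjmxE m n (A : 'M[R[i]]_(m, n)) : adjmx A = map_mx conjc A^T.
Proof. by apply/matrixP => i j; rewrite !mxE. Qed.

Lemma adjmx_mul m n p (A : 'M[R[i]]_(m, n)) (B : 'M[R[i]]_(n, p)) :
  adjmx (A *m B) = adjmx B *m adjmx A.
Proof. by rewrite !adjmxE trmx_mul map_mxM. Qed.

Lemma adjmxD m n (A B : 'M[R[i]]_(m, n)) : adjmx (A + B) = adjmx A + adjmx B.
Proof. by apply/matrixP => i j; rewrite !mxE rmorphD. Qed.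

Lemma adjmxN m n (A : 'M[R[i]]_(m, n)) : adjmx (- A) = - adjmx A.
Proof. by apply/matrixP => i j; rewrite !mxE rmorphN. Qed.

Lemma adjmxZ m n a (A : 'M[R[i]]_(m, n)) : adjmx (a *: A) = conjc a *: adjmx A.
Proof. by apply/matrixP => i j; rewrite !mxE rmorphM. Qed.

Lemma adjmxK m n (A : 'M[R[i]]_(m, n)) : adjmx (adjmx A) = A.
Proof. by apply/matrixP => i j; rewrite !mxE conjcK. Qed.

Lemma adjmx_scalar n (a : R[i]) : adjmx (a%:M : 'M_n) = (conjc a)%:M.
Proof.
apply/matrixP => i j; rewrite !mxE eq_sym; case: eqP => _; rewrite ?mulr1n ?mulr0n //.
by rewrite conjc0.
Qed.

Lemma herm_part_adj n (T : 'M[R[i]]_n) : adjmx (herm_part T) = herm_part T.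
Proof.
rewrite /herm_part adjmxZ adjmxD adjmxK.
have -> : conjc (2%:R^-1 : R[i]) = 2%:R^-1.
  by rewrite fmorphV rmorph_nat.
by rewrite addrC.
Qed.

Definition sqn n (x : 'cV[R[i]]_n) : R :=
  \sum_(k < n) (complex.Re (x k 0) ^+ 2 + complex.Im (x k 0) ^+ 2).

Lemma vnormE n (x : 'cV[R[i]]_n) : vnorm x = Num.sqrt (sqn x).
Proof. by []. Qed.

Lemma conjc_mul_self (z : R[i]) : conjc z * z = (complex.Re z ^+ 2 + complex.Im z ^+ 2)%:C.
Proof.
case: z => a b; apply/eqP; rewrite eq_complex /=; apply/andP; split; apply/eqP.
  ring.
ring.
Qed.

Lemma dotE n (x : 'cV[R[i]]_n) : (adjmx x *m x) 0 0 = (sqn x)%:C.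
Proof.
rewrite !mxE /sqn rmorph_sum; apply: eq_bigr => k _.
by rewrite !mxE conjc_mul_self.
Qed.

Lemma sqn_ge0 n (x : 'cV[R[i]]_n) : 0 <= sqn x.
Proof. by apply: sumr_ge0 => k _; rewrite addr_ge0 // sqr_ge0. Qed.

Lemma sqn_eq0 n (x : 'cV[R[i]]_n) : sqn x = 0 -> x = 0.
Proof.
move=> /eqP; rewrite psumr_eq0 => [/allP H|k _]; last by rewrite addr_ge0 // sqr_ge0.
apply/matrixP => k j; rewrite ord1 mxE.
have /H : k \in index_enum 'I_n by rewrite mem_index_enum.
rewrite /= paddr_eq0 ?sqr_ge0 // !sqrf_eq0 => /andP[/eqP h1 /eqP h2].
by case: (x k 0) h1 h2 => a b /= -> ->.
Qed.

Lemma sqnZ n (a : R) (x : 'cV[R[i]]_n) : sqn (a%:C *: x) = a ^+ 2 * sqn x.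
Proof.
rewrite /sqn mulr_sumr; apply: eq_bigr => k _; rewrite !mxE.
case: (x k 0) => u v /=; ring.
Qed.

Lemma sqnN n (x : 'cV[R[i]]_n) : sqn (- x) = sqn x.
Proof.
rewrite /sqn; apply: eq_bigr => k _; rewrite !mxE.
case: (x k 0) => u v /=; ring.
Qed.

End Basic.
Section Ident.
Variable R : realType.
Variable n : nat.
Implicit Types (x : 'cV[R[i]]_n) (T : 'M[R[i]]_n).

Definition qf T x : R[i] := (adjmx x *m herm_part T *m x) 0 0.

Lemma entryD p q (A B : 'M[R[i]]_(p, q)) i j : (A + B) i j = A i j + B i j.
Proof. by rewrite mxE. Qed.
Lemma entryN p q (A : 'M[R[i]]_(p, q)) i j : (- A) i j = - A i j.
Proof. by rewrite mxE. Qed.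
Lemma entryZ p q a (A : 'M[R[i]]_(p, q)) i j : (a *: A) i j = a * A i j.
Proof. by rewrite mxE. Qed.

Lemma ident T (t : R) x :
  (sqn (((t%:C)%:M - T) *m x))%:C =
  (t ^+ 2 * sqn x)%:C - 2%:R * t%:C * qf T x + (sqn (T *m x))%:C.
Proof.
rewrite -!dotE /qf rmorphM /= -dotE.
rewrite mulmxBl mul_scalar_mx adjmxD adjmxN adjmxZ conjc_real adjmx_mul.
rewrite /herm_part mulmxBl !mulmxBr -!scalemxAl -!scalemxAr mulmxDr -!scalemxAl mulmxDl.
rewrite !mulmxA !(entryD, entryN, entryZ).
set a := (adjmx x *m x) 0 0.
set b := (adjmx x *m T *m x) 0 0.
set c := (adjmx x *m adjmx T *m x) 0 0.
set d := (adjmx x *m adjmx T *m T *m x) 0 0.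
rewrite rmorphXn /=.
have h2 : (2%:R : R[i]) != 0 by rewrite pnatr_eq0.
by field.
Qed.
End Ident.
Section Core.
Variable R : realType.

Definition hub n (T : 'M[R[i]]_n) (l : R) :=
  forall x, exists Q : R, qf T x = Q%:C /\ Q <= l * sqn x.
Definition heig n (T : 'M[R[i]]_n) (l : R) :=
  exists2 x0 : 'cV[R[i]]_n, x0 != 0 & herm_part T *m x0 = l%:C *: x0.

Lemma sqn_gt0 n (x : 'cV[R[i]]_n) : x != 0 -> 0 < sqn x.
Proof.
move=> hx; rewrite lt_neqAle sqn_ge0 andbT; apply/eqP => h.
by move: hx; rewrite (sqn_eq0 (esym h)) eqxx.
Qed.

Lemma lower_quad n (T : 'M[R[i]]_n) l t x : hub T l -> 0 < t ->
  (t ^+ 2 - 2%:R * t * l) * sqn x <= sqn (((t%:C)%:M - T) *m x).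
Proof.
move=> hT t0; have [Q [hQ hQl]] := hT x.
have := ident T t x; rewrite hQ.
rewrite -(rmorph_nat (real_complex R) 2) -!rmorphM -rmorphB -rmorphD.
move=> /complexI ->.
have := sqn_ge0 (T *m x); have := sqn_ge0 x.
move=> h1 h2.
have : 0 <= 2%:R * t * (l * sqn x - Q) by rewrite mulr_ge0 ?subr_ge0 // mulr_ge0 // ltW.
lra.
Qed.

Lemma unit_M n (T : 'M[R[i]]_n) l t : hub T l -> 0 < t -> 0 < t ^+ 2 - 2%:R * t * l ->
  ((t%:C)%:M - T) \in unitmx.
Proof.
move=> hT t0 D0; rewrite unitmxE unitfE -det_tr; apply/negP => /det0P [v v0 hv].
have hx : ((t%:C)%:M - T) *m v^T = 0.
  by rewrite -[_ *m _]trmxK trmx_mul trmxK hv trmx0.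
have := lower_quad v^T hT t0; rewrite hx.
have -> : sqn (0 : 'cV[R[i]]_n) = 0 by rewrite /sqn big1 // => k _; rewrite mxE /= expr0n /= addr0.
have : v^T != 0 by rewrite trmx_eq0.
move=> /sqn_gt0 hs; move=> h.
have := mulr_gt0 D0 hs; lra.
Qed.

Lemma normalize n (x : 'cV[R[i]]_n) : x != 0 ->
  vnorm (((Num.sqrt (sqn x))^-1)%:C *: x) = 1.
Proof.
move=> /sqn_gt0 hs; rewrite vnormE sqnZ exprVn sqr_sqrtr ?ltW // mulVf ?sqrtr1 //.
by rewrite gt_eqF.
Qed.

Definition theset n (N : 'M[R[i]]_n) :=
  [set vnorm (N *m x) | x in [set x : 'cV[R[i]]_n | vnorm x = 1]]%classic.

Lemma opnormE n (N : 'M[R[i]]_n) : opnorm N = sup (theset N).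
Proof. by []. Qed.

Lemma vnorm1_sqn n (y : 'cV[R[i]]_n) : vnorm y = 1 -> sqn y = 1.
Proof.
by rewrite vnormE => h; rewrite -(sqr_sqrtr (sqn_ge0 y)) h expr1n.
Qed.

Lemma theset_ne n (N : 'M[R[i]]_n.+1) : (theset N !=set0)%classic.
Proof.
have hx : (const_mx 1 : 'cV[R[i]]_n.+1) != 0.
  apply/negP => /eqP/matrixP/(_ ord0 ord0); rewrite !mxE => /eqP; by rewrite oner_eq0.
by exists (vnorm (N *m (((Num.sqrt (sqn (const_mx 1 : 'cV[R[i]]_n.+1)))^-1)%:C *: const_mx 1)));
  exists ((((Num.sqrt (sqn (const_mx 1 : 'cV[R[i]]_n.+1)))^-1)%:C *: const_mx 1)) => //=;
  rewrite normalize.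
Qed.

Lemma upper n (T : 'M[R[i]]_n.+1) l t (hT : hub T l) (t0 : 0 < t)
  (D0 : 0 < t ^+ 2 - 2%:R * t * l) :
  let r := opnorm (invmx ((t%:C)%:M - T)) in
  ubound (theset (invmx ((t%:C)%:M - T))) (Num.sqrt (t ^+ 2 - 2%:R * t * l)^-1)
  /\ 0 <= r /\ r ^+ 2 * (t ^+ 2 - 2%:R * t * l) <= 1.
Proof.
move=> r; set D := t ^+ 2 - 2%:R * t * l.
have hU := unit_M hT t0 D0.
have ub : ubound (theset (invmx ((t%:C)%:M - T))) (Num.sqrt D^-1).
  move=> e [y /= hy <-]; rewrite vnormE ler_wsqrtr //.
  have := lower_quad (invmx ((t%:C)%:M - T) *m y) hT t0.
  rewrite mulKVmx // (vnorm1_sqn hy) => h.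
  by rewrite -div1r ler_pdivlMr // mulrC.
have rle : r <= Num.sqrt D^-1 by apply: ge_sup => //; apply: theset_ne.
have r0 : 0 <= r.
  have [e he] := theset_ne (invmx ((t%:C)%:M - T)).
  apply: le_trans (ub_le_sup _ he); last by exists (Num.sqrt D^-1).
  by case: he => y _ <-; apply: sqrtr_ge0.
split => //; split => //.
have : r ^+ 2 <= D^-1.
  have Di : 0 <= D^-1 by rewrite invr_ge0 ltW.
  by rewrite -(sqr_sqrtr Di) ler_pXn2r // ?nnegrE ?sqrtr_ge0.
move=> h; have := ler_wpM2r (ltW D0) h; rewrite mulVf // gt_eqF //.
Qed.

End Core.
Section Core2.
Variable R : realType.

Lemma lower n (T : 'M[R[i]]_n.+1) l t x0 (hT : hub T l) (hx0 : x0 != 0)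
  (hH : herm_part T *m x0 = l%:C *: x0) (t0 : 0 < t)
  (D0 : 0 < t ^+ 2 - 2%:R * t * l) :
  sqn x0 <= opnorm (invmx ((t%:C)%:M - T)) ^+ 2 *
     ((t ^+ 2 - 2%:R * t * l) * sqn x0 + sqn (T *m x0)).
Proof.
set D := t ^+ 2 - 2%:R * t * l.
set M := (t%:C)%:M - T.
have hU : M \in unitmx := unit_M hT t0 D0.
have hq : qf T x0 = (l * sqn x0)%:C.
  by rewrite /qf -mulmxA hH -scalemxAr entryZ dotE rmorphM.
have hy : sqn (M *m x0) = D * sqn x0 + sqn (T *m x0).
  apply: complexI; rewrite ident hq.
  rewrite -(rmorph_nat (real_complex R) 2) -!rmorphM -rmorphB -rmorphD /D.
  congr (_%:C); ring.
have s0 := sqn_gt0 hx0.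
have y0 : M *m x0 != 0.
  apply/negP => /eqP h0; have := lower_quad x0 hT t0; rewrite -/M h0.
  have -> : sqn (0 : 'cV[R[i]]_n.+1) = 0 by rewrite /sqn big1 // => k _; rewrite mxE /= expr0n /= addr0.
  have := mulr_gt0 D0 s0; lra.
have sy := sqn_gt0 y0.
set a := (Num.sqrt (sqn (M *m x0)))^-1.
have hel : theset (invmx M) (vnorm (a%:C *: x0)).
  exists (a%:C *: (M *m x0)); first exact: normalize.
  by rewrite -scalemxAr mulmxA mulVmx // mul1mx.
have [ub [r0 _]] := upper hT t0 D0.
have := ub_le_sup (ex_intro _ _ ub) hel; rewrite -opnormE -/M.
set r := opnorm (invmx M) => hr.
have : vnorm (a%:C *: x0) ^+ 2 <= r ^+ 2.
  by rewrite ler_pXn2r // ?nnegrE ?sqrtr_ge0.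
rewrite vnormE sqr_sqrtr ?sqn_ge0 // sqnZ /a exprVn sqr_sqrtr ?sqn_ge0 // -hy.
move=> h; have := ler_wpM2r (ltW sy) h.
by rewrite mulrAC mulVf ?gt_eqF // mul1r.
Qed.

End Core2.
Section Core3.
Variable R : realType.

Lemma core n m (A : 'M[R[i]]_n.+1) (B : 'M[R[i]]_m.+1) lA lB
  (hA : hub A lA) (hB : hub B lB) (hE : heig B lB)
  (hAB : forall z : R[i], resolvent_norm A z = resolvent_norm B z) : lB <= lA.
Proof.
case: hE => x0 hx0 hH.
set s0 := sqn x0; set c0 := sqn (B *m x0).
have s0p : 0 < s0 := sqn_gt0 hx0.
have c0p : 0 <= c0 := sqn_ge0 _.
rewrite leNgt; apply/negP => hlt.
have dl : 0 < lB - lA by rewrite subr_gt0.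
set t := 1 + 2%:R * `|lA| + 2%:R * `|lB| + c0 / ((lB - lA) * s0).
have k0 : 0 <= c0 / ((lB - lA) * s0) by rewrite divr_ge0 // ltW // mulr_gt0.
have aA := ler_norm lA; have aB := ler_norm lB.
have nA := normr_ge0 lA; have nB := normr_ge0 lB.
have t0 : 0 < t by rewrite /t; lra.
have DA : 0 < t ^+ 2 - 2%:R * t * lA.
  have : 2%:R * lA < t by rewrite /t; lra.
  move=> h; have -> : t ^+ 2 - 2%:R * t * lA = t * (t - 2%:R * lA) by ring.
  rewrite mulr_gt0 //; lra.
have DB : 0 < t ^+ 2 - 2%:R * t * lB.
  have : 2%:R * lB < t by rewrite /t; lra.
  move=> h; have -> : t ^+ 2 - 2%:R * t * lB = t * (t - 2%:R * lB) by ring.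
  rewrite mulr_gt0 //; lra.
have key : c0 < t * (lB - lA) * s0.
  have : c0 <= c0 / ((lB - lA) * s0) * ((lB - lA) * s0).
    by rewrite divfK // gt_eqF // mulr_gt0.
  have : 0 < (lB - lA) * s0 by rewrite mulr_gt0.
  move=> h1 h2.
  have : (c0 / ((lB - lA) * s0)) * ((lB - lA) * s0) < t * ((lB - lA) * s0).
    by rewrite ltr_pM2r //; rewrite /t; lra.
  rewrite mulrA; lra.
have := hAB (t%:C).
rewrite /resolvent_norm (unit_M hA t0 DA) (unit_M hB t0 DB) => -[] hr.
have [_ [r0 hupA]] := upper hA t0 DA.
have hlo := lower hB hx0 hH t0 DB.
rewrite -hr -/s0 -/c0 in hlo.
move: hupA hlo; set r := opnorm _.
set r2 := r ^+ 2.
have r20 : 0 <= r2 by rewrite /r2 sqr_ge0.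
move=> h1 h2.
have h3 : r2 * (t ^+ 2 - 2%:R * t * lA) * s0 <= s0.
  by have := ler_wpM2r (ltW s0p) h1; rewrite mul1r.
have h4 : r2 * (2%:R * (t * (lB - lA) * s0) - c0) <= 0.
  have -> : r2 * (2%:R * (t * (lB - lA) * s0) - c0) =
    r2 * (t ^+ 2 - 2%:R * t * lA) * s0 -
    r2 * ((t ^+ 2 - 2%:R * t * lB) * s0 + c0) by ring.
  lra.
have h5 : 0 < 2%:R * (t * (lB - lA) * s0) - c0 by lra.
have : r2 <= 0.
  by rewrite leNgt; apply/negP => hp; have := mulr_gt0 hp h5; lra.
move=> h6; have : r2 = 0 by apply: le_anti; rewrite h6 r20.
move=> e; rewrite e mul0r in h2.
by have := lt_le_trans s0p h2; rewrite ltxx.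
Qed.

End Core3.
Section Spec.
Variable R : realType.
Local Open Scope sesquilinear_scope.

Definition hlb n (T : 'M[R[i]]_n) (l : R) :=
  forall x, exists Q : R, qf T x = Q%:C /\ l * sqn x <= Q.

Lemma exists_max n (f : 'I_n.+1 -> R) : exists i0, forall i, f i <= f i0.
Proof. by case: (@arg_maxP _ _ _ ord0 xpredT f isT) => i0 _ h; exists i0 => i; apply: h. Qed.

Lemma exists_min n (f : 'I_n.+1 -> R) : exists i0, forall i, f i0 <= f i.
Proof. by case: (@arg_minP _ _ _ ord0 xpredT f isT) => i0 _ h; exists i0 => i; apply: h. Qed.

Lemma heig_eig n (T : 'M[R[i]]_n) l : heig T l -> eigenvalue (herm_part T) l%:C.
Proof.
case=> x hx hH; apply/eigenvalueP; exists (adjmx x).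
  by rewrite -[herm_part T]herm_part_adj -adjmx_mul hH adjmxZ conjc_real.
by apply: contra hx => /eqP h; rewrite -[x]adjmxK h; apply/eqP/matrixP => i j; rewrite !mxE conjc0.
Qed.

Lemma adjmx_tc m n (P : 'M[R[i]]_(m, n)) : adjmx P = P ^t*.
Proof. by apply/matrixP => i j; rewrite !mxE. Qed.

Lemma spec_all n (T : 'M[R[i]]_n.+1) :
  (exists l, is_max_eig (herm_part T) l /\ hub T l /\ heig T l) /\
  (exists l, is_min_eig (herm_part T) l /\ hlb T l /\ heig T l).
Proof.
set H := herm_part T.
have hH : H \is hermsymmx.
  apply/is_hermitianmxP; rewrite expr0 scale1r -adjmx_tc.
  by rewrite /H herm_part_adj.
set P := spectralmx H; set d := spectral_diag H.
have hdec : H = invmx P *m diag_mx d *m P.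
  exact/orthomx_spectralP/hermitian_normalmx.
have hPu : P \is unitarymx by apply: spectral_unitarymx.
have hPi : invmx P = P ^t* by apply: invmx_unitary.
have hreal : forall j, d 0 j = (complex.Re (d 0 j))%:C.
  move=> j; rewrite RRe_real //.
  by have /mxOverP := hermitian_spectral_diag_real hH; apply.
set ds := fun j => complex.Re (d 0 j).
have hPP : P ^t* *m P = 1%:M by rewrite -hPi mulVmx // spectral_unit.
have hPP' : P *m P ^t* = 1%:M by rewrite -hPi mulmxV // spectral_unit.
have hq : forall x, qf T x =
   (\sum_k ds k * (complex.Re ((P *m x) k 0) ^+ 2 + complex.Im ((P *m x) k 0) ^+ 2))%:C.
  move=> x; rewrite /qf -/H hdec hPi.
  rewrite !mulmxA -adjmx_tc -adjmx_mul -!mulmxA mulmxA.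
  set y := P *m x.
  rewrite mul_mx_diag !mxE rmorph_sum; apply: eq_bigr => k _.
  rewrite !mxE rmorphM /= -conjc_mul_self [d 0 k]hreal /ds; ring.
have hsq : forall x, sqn (P *m x) = sqn x.
  move=> x; apply: complexI; rewrite -!dotE adjmx_mul (adjmx_tc P).
  by rewrite mulmxA -(mulmxA (adjmx x)) hPP mulmx1.
have hE : forall j, heig T (ds j).
  move=> j; exists (P ^t* *m delta_mx j 0).
    apply/negP => /eqP h0.
    have := congr1 (mulmx P) h0; rewrite mulmxA hPP' mul1mx mulmx0.
    move=> /matrixP /(_ j 0); rewrite !mxE !eqxx /=.
    by move/eqP; rewrite oner_eq0.
  rewrite -/H hdec hPi !mulmxA -(mulmxA _ P) hPP' mulmx1.
  rewrite -mulmxA scalemxAr; congr (_ *m _).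
  rewrite mul_diag_mx; apply/matrixP => a b; rewrite !mxE.
  case: (eqVneq a j) => [->|ne]; first by rewrite -hreal.
  by rewrite !mulr0n !mulr0.
have hEv : forall mu, eigenvalue H mu -> exists j, mu = (ds j)%:C.
  move=> mu /eigenvalueP [v hv v0].
  set w := v *m P ^t*.
  have hw : w *m diag_mx d = mu *: w.
    have := congr1 (mulmx^~ (P ^t*)) hv; rewrite /= hdec hPi.
    rewrite -scalemxAl -/w !mulmxA -(mulmxA _ P) hPP' mulmx1.
    by rewrite -!mulmxA mulmxA.
  have w0 : w != 0.
    apply: contra v0 => /eqP h0; apply/eqP.
    by have := congr1 (mulmx^~ P) h0; rewrite /= mul0mx /w -mulmxA hPP mulmx1.
  have [j hj] : exists j, w 0 j != 0.
    apply/existsP; apply: contraNT w0; rewrite negb_exists => /forallP h.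
    apply/eqP/rowP => b; move: (h b); rewrite negbK => /eqP ->; by rewrite mxE.
  clearbody w; exists j; have /matrixP /(_ 0 j) := hw; rewrite mul_mx_diag !mxE -hreal.
  by move=> /eqP; rewrite [mu * _]mulrC (inj_eq (mulfI hj)) => /eqP ->.
split.
- have [i0 hi0] := exists_max ds.
  exists (ds i0); split.
    split; first exact: heig_eig (hE i0).
    by move=> mu /hEv [j ->]; rewrite lecR.
  split; last by apply: hE.
  move=> x; eexists; split; first exact: hq.
  rewrite -hsq mulr_sumr; apply: ler_sum => k _; apply: ler_wpM2r; last exact: hi0.
  by rewrite addr_ge0 // sqr_ge0.
- have [i0 hi0] := exists_min ds.
  exists (ds i0); split; last first.
    split; last by apply: hE.
    move=> x; eexists; split; first exact: hq.
    rewrite -hsq mulr_sumr; apply: ler_sum => k _; apply: ler_wpM2r; last exact: hi0.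
    by rewrite addr_ge0 // sqr_ge0.
  split; first exact: heig_eig (hE i0).
  by move=> mu /hEv [j ->]; rewrite lecR.
Qed.
End Spec.
Section Neg.
Variable R : realType.

Lemma herm_partN n (T : 'M[R[i]]_n) : herm_part (- T) = - herm_part T.
Proof. by rewrite /herm_part adjmxN -opprD scalerN. Qed.

Lemma qfN n (T : 'M[R[i]]_n) x : qf (- T) x = - qf T x.
Proof. by rewrite /qf herm_partN mulmxN mulNmx entryN. Qed.

Lemma hub_neg n (T : 'M[R[i]]_n) l : hlb T l -> hub (- T) (- l).
Proof.
move=> h x; have [Q [hQ hl]] := h x; exists (- Q); split.
  by rewrite qfN hQ rmorphN.
by rewrite mulNr lerN2.
Qed.

Lemma heig_neg n (T : 'M[R[i]]_n) l : heig T l -> heig (- T) (- l).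
Proof.
case=> x hx hH; exists x => //.
by rewrite herm_partN mulNmx hH rmorphN scaleNr.
Qed.

Lemma opnormN n (N : 'M[R[i]]_n) : opnorm (- N) = opnorm N.
Proof.
rewrite /opnorm; congr sup; apply/seteqP; split => e [x hx <-]; exists x => //;
  by rewrite mulNmx !vnormE sqnN.
Qed.

Lemma unitN1Z n (M : 'M[R[i]]_n) : (-1 *: M \in unitmx) = (M \in unitmx).
Proof.
have u1 : (-1 : R[i]) \is a GRing.unit by rewrite unitrN1.
exact: (@unitmxZ _ n (-1) M u1).
Qed.

Lemma unitN n (M : 'M[R[i]]_n) : (- M \in unitmx) = (M \in unitmx).
Proof. by rewrite -unitN1Z scaleN1r. Qed.

Lemma invN1Z n (M : 'M[R[i]]_n) : M \in unitmx -> invmx (-1 *: M) = - invmx M.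
Proof.
move=> hU; have hU' : -1 *: M \in unitmx by rewrite unitN1Z.
rewrite (@invmxZ _ n (-1) M hU').
by rewrite invrN1 scaleN1r.
Qed.

Lemma invN n (M : 'M[R[i]]_n) : M \in unitmx -> invmx (- M) = - invmx M.
Proof. by move=> hU; rewrite -invN1Z // scaleN1r. Qed.

Lemma if_same_oo (b : bool) (x y : \bar R) : (b -> x = y) ->
  (if b then x else (+oo)%E) = (if b then y else (+oo)%E).
Proof. by case: b => // ->. Qed.

Lemma resolventN n (T : 'M[R[i]]_n) z :
  resolvent_norm (- T) z = resolvent_norm T (- z).
Proof.
have e : z%:M - - T = - ((- z)%:M - T).
  rewrite opprB; apply/matrixP => i j; rewrite !mxE.
  rewrite mulNrn opprK opprK; exact: addrC.
rewrite /resolvent_norm e unitN.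
apply: if_same_oo => hU.
by rewrite (invN hU) opnormN.
Qed.

End Neg.

Theorem lemma7 (R : realType) (n m : nat)
  (A : 'M[R[i]]_n.+1) (B : 'M[R[i]]_m.+1)
  (hAB : forall z : R[i], resolvent_norm A z = resolvent_norm B z) :
  (exists l : R, is_max_eig (herm_part A) l /\ is_max_eig (herm_part B) l) /\
  (exists l : R, is_min_eig (herm_part A) l /\ is_min_eig (herm_part B) l).
Proof.
have [[la [ma [ua ea]]] [lA [mA [uA eA]]]] := spec_all A.
have [[lb [mb [ub eb]]] [lB [mB [uB eB]]]] := spec_all B.
have hBA : forall z : R[i], resolvent_norm B z = resolvent_norm A z by move=> z; rewrite hAB.
split.
  have e : la = lb.
    by apply: le_anti; rewrite (core ua ub eb hAB) (core ub ua ea hBA).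
  by exists la; split => //; rewrite e.
have hNAB : forall z : R[i], resolvent_norm (- A) z = resolvent_norm (- B) z.
  by move=> z; rewrite !resolventN.
have hNBA : forall z : R[i], resolvent_norm (- B) z = resolvent_norm (- A) z.
  by move=> z; rewrite !resolventN.
have h1 := core (hub_neg uA) (hub_neg uB) (heig_neg eB) hNAB.
have h2 := core (hub_neg uB) (hub_neg uA) (heig_neg eA) hNBA.
rewrite lerN2 in h1; rewrite lerN2 in h2.
have e : lA = lB by apply: le_anti; rewrite h1 h2.
by exists lA; split => //; rewrite e.
Qed.
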